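(* Let $b\ge 2$. For every positive integer $N$ there exist infinitely many positive integers $M$ such that $N\cdot M$ is a $b$-wMRH number. In particular every positive integer divides some $b$-wMRH number.
   Context: Fix a base $b\ge 2$. $s_b(N)$ is the sum of the base-$b$ digits of $N$. For a positive integer $X$, its reversal $X^R$ is the integer whose base-$b$ representation is that of $X$ written in reverse order (leading zeros of the result are dropped). A positive integer $N$ is a $b$-wMRH number if there exists an integer $A\ge 0$ such that $N=(A+s_b(N))\cdot(A+s_b(N))^R$. *)

(* Defs.v *)
From mathcomp Require Import all_boot.
Set Implicit Arguments. Unset Strict Implicit. Unset Printing Implicit Defensive.

(* Base-b digits of n, least significant first (fuel = n suffices for b >= 2). *)
Fixpoint digits_aux (b fuel n : nat) : seq nat :=
  match fuel with
  | 0 => [::]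
  | fuel'.+1 => if n == 0 then [::] else (n %% b) :: digits_aux b fuel' (n %/ b)
  end.

Definition digits (b n : nat) : seq nat := digits_aux b n n.

Definition digsum (b n : nat) : nat := sumn (digits b n).

(* X^R: integer whose base-b representation is that of X reversed.
   Reading the LSD-first digit list as an MSD-first numeral gives the
   reversal; leading zeros are dropped automatically. *)
Definition rev_b (b x : nat) : nat := foldl (fun acc d => acc * b + d) 0 (digits b x).

Definition wMRH (b N : nat) : Prop :=
  0 < N /\ exists A : nat, N = (A + digsum b N) * rev_b b (A + digsum b N).

Lemma rev_b_test : rev_b 10 120 = 21 /\ digsum 10 987 = 24.
Proof. split; by vm_compute. Qed.

(* Main.v *)
Require Import Defs.
From mathcomp Require Import all_boot.
From mathcomp Require Import zify.

Lemma digits_aux_fuel b (hb : 2 <= b) f1 : forall f2 n, n <= f1 -> n <= f2 ->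
  digits_aux b f1 n = digits_aux b f2 n.
Proof.
elim: f1 => [|f1 IH] [|f2] n /= h1 h2.
- by [].
- by move: h1; rewrite leqn0 => /eqP ->.
- by move: h2; rewrite leqn0 => /eqP ->.
- case: eqP => // /eqP n0; congr (_ :: _); apply: IH.
  + have : n %/ b < n by rewrite ltn_Pdiv // lt0n.
    lia.
  + have : n %/ b < n by rewrite ltn_Pdiv // lt0n.
    lia.
Qed.

Lemma digits_mulb b (hb : 2 <= b) x : 0 < x -> digits b (x * b) = 0 :: digits b x.
Proof.
move=> x0; rewrite /digits.
have xb0 : 0 < x * b by rewrite muln_gt0 x0; lia.
case E: (x * b) => [|m]; first by rewrite E in xb0.
rewrite /= -E modnMl mulnK; last by lia.
congr (_ :: _); apply: digits_aux_fuel => //; nia.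
Qed.

Lemma digits_mulbk b (hb : 2 <= b) x k : 0 < x -> digsum b (x * b ^ k) = digsum b x
  /\ rev_b b (x * b ^ k) = rev_b b x.
Proof.
move=> x0; elim: k => [|k IH]; first by rewrite expn0 muln1.
case: IH => IH1 IH2.
have p : 0 < x * b ^ k by rewrite muln_gt0 x0 expn_gt0; lia.
rewrite expnSr mulnA; split.
- by rewrite -IH1 /digsum digits_mulb.
- by rewrite -IH2 /rev_b digits_mulb.
Qed.

Lemma foldl_mono b s : forall a c, a <= c ->
  foldl (fun acc d => acc * b + d) a s <= foldl (fun acc d => acc * b + d) c s.
Proof.
elim: s => [|d s IH] a c h //=; apply: IH; rewrite leq_add2r leq_mul2r h orbT //.
Qed.

Lemma rev_pos b (hb : 2 <= b) n : 0 < n -> 0 < rev_b b n.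
Proof.
elim: n {-2}n (leqnn n) => [|m IH] n hn n0; first by lia.
rewrite /rev_b /digits.
case E: n => [|n']; first by rewrite E in n0.
rewrite /= -E.
have lt : n %/ b < n by rewrite ltn_Pdiv // lt0n.
case: (posnP (n %/ b)) => q0.
- rewrite q0; have -> : digits_aux b n' 0 = [::] by case: (n').
  have : n %% b = n by apply: modn_small; rewrite ltnNge -divn_gt0 ?q0 //; lia.
  by move=> /= ->.
- have := IH (n %/ b) ltac:(lia) q0; rewrite /rev_b /digits.
  rewrite (@digits_aux_fuel b hb (n %/ b) n' (n %/ b)); try lia.
  move=> h; apply: leq_trans h _; apply: foldl_mono; by [].
Qed.

Theorem corollary15 (b : nat) (hb : 2 <= b) (N : nat) (hN : 0 < N) :
  forall K : nat, exists M : nat, K < M /\ wMRH b (N * M).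
Proof.
move=> K.
set R := rev_b b N.
have R0 : 0 < R := rev_pos b hb N hN.
set S := digsum b (N * R).
set k := K + S + 1.
have bk : k < b ^ k by apply: ltn_expl.
exists (b ^ k * R); split; first by nia.
have NR0 : 0 < N * R by rewrite muln_gt0 hN R0.
have [d1 _] := digits_mulbk b hb (N * R) k NR0.
have [_ r1] := digits_mulbk b hb N k hN.
have eq : N * (b ^ k * R) = N * R * b ^ k by rewrite mulnCA mulnC.
split; first by rewrite eq muln_gt0 NR0 expn_gt0; lia.
exists (N * b ^ k - S).
rewrite eq d1 -/S subnK; last by nia.
by rewrite r1 -/R; nia.
Qed.
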